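(* Let $(\mathcal{F},\mathcal{F}_d,R)$ be a justification frame, $x\in\mathcal{F}_d$, let $\mathbb{B}$ be a branch selection for $x$, and let $x\gets A$ be a rule in $R$. Then there exists $y^*\in A$ such that for every $J_{y^*}\in\mathfrak{J}(y^* )$, $\mathbb{B}$ contains at least one branch of the form $x\to y^*\to b$ where $y^*\to b$ is a branch of $J_{y^*}$ starting from its root.
   Context: A fact space is a set $\mathcal{F}$ containing $\mathcal{L}=\{\mathbf{t},\mathbf{f},\mathbf{u}\}$, equipped with an involution $\sim$ with $\sim\mathbf{t}=\mathbf{f}$, $\sim\mathbf{u}=\mathbf{u}$, $\sim x\ne x$ for $x\ne\mathbf{u}$. A justification frame is $(\mathcal{F},\mathcal{F}_d,R)$ with defined facts $\mathcal{F}_d\subseteq\mathcal{F}$, $\sim\mathcal{F}_d=\mathcal{F}_d$, $\mathcal{L}\cap\mathcal{F}_d=\emptyset$, and rules $R\subseteq\mathcal{F}_d\times2^{\mathcal{F}}$ written $x\gets A$, such that each $x\in\mathcal{F}_d$ has a rule with nonempty body and no rule with empty body; open facts $\mathcal{F}_o=\mathcal{F}\setminus\mathcal{F}_d$. A (tree-like) justification is a directed labeled forest whose internal nodes $n$ are labeled by defined facts with $\ell(n)\gets\{\ell(m): (n,m)\text{ an edge}\}\in R$; it is locally complete if no leaf is labeled by a defined fact; it is rooted in $x$ if a node labeled $x$ reaches all nodes. $\mathfrak{J}(x)$ is the set of locally complete justifications rooted in $x$; for an open fact $y$, $\mathfrak{J}(y)$ consists only of the single-node justification labeled $y$ (whose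 only branch is $y$). A branch is an infinite sequence of defined facts or a finite sequence of defined facts followed by an open fact. A $J$-branch starting in $x$ is a path in $J$ from the root node labeled $x$ that is infinite or ends in a leaf. A branch selection for $x$ is a set $\mathbb{B}$ of branches starting in $x$ such that for each locally complete justification $J$ rooted in $x$, $\mathbb{B}$ contains at least one $J$-branch starting in $x$. *)

(* Defs.v *)
From Stdlib Require Import Relations.

Set Implicit Arguments.

Definition is_fact_space (F : Type) (neg : F -> F) (t f u : F) : Prop :=
  t <> f /\ t <> u /\ f <> u /\
  (forall x, neg (neg x) = x) /\
  neg t = f /\ neg u = u /\
  (forall x, x <> u -> neg x <> x).

Definition is_justification_frame (F : Type) (neg : F -> F) (t f u : F)
    (Fd : F -> Prop) (R : F -> (F -> Prop) -> Prop) : Prop :=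
  is_fact_space neg t f u /\
  (forall x, Fd x <-> Fd (neg x)) /\
  ~ Fd t /\ ~ Fd f /\ ~ Fd u /\
  (forall x A, R x A -> Fd x) /\
  (forall x, Fd x -> exists A, R x A /\ exists y, A y) /\
  (forall x A, R x A -> exists y, A y).

Record labeled_graph (F : Type) := LabeledGraph {
  node : Type;
  edge : node -> node -> Prop;
  lab : node -> F
}.

Definition is_forest (F : Type) (J : labeled_graph F) : Prop :=
  (forall n1 n2 m, edge J n1 m -> edge J n2 m -> n1 = n2) /\
  (forall n, ~ clos_trans _ (@edge F J) n n).

Definition is_leaf (F : Type) (J : labeled_graph F) (n : node J) : Prop :=
  forall m, ~ edge J n m.

Definition is_justification (F : Type) (Fd : F -> Prop) (R : F -> (F -> Prop) -> Prop)
    (J : labeled_graph F) : Prop :=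
  is_forest J /\
  (forall n, ~ is_leaf J n ->
     Fd (lab J n) /\ R (lab J n) (fun y => exists m, edge J n m /\ lab J m = y)).

Definition locally_complete (F : Type) (Fd : F -> Prop) (J : labeled_graph F) : Prop :=
  forall n, is_leaf J n -> ~ Fd (lab J n).

Definition rooted_in (F : Type) (J : labeled_graph F) (r : node J) (x : F) : Prop :=
  lab J r = x /\ forall n, clos_refl_trans _ (@edge F J) r n.

Definition in_frakJ (F : Type) (Fd : F -> Prop) (R : F -> (F -> Prop) -> Prop)
    (x : F) (J : labeled_graph F) (r : node J) : Prop :=
  is_justification Fd R J /\ locally_complete Fd J /\ rooted_in J r x.

(* Sequences of facts: b i = Some (i-th fact), None past the end of a finite sequence. *)
Definition fseq (F : Type) := nat -> option F.

Definition is_branch (F : Type) (Fd : F -> Prop) (b : fseq F) : Prop :=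
  (forall i, exists y, b i = Some y /\ Fd y) \/
  (exists n y, b n = Some y /\ ~ Fd y /\
     (forall i, i < n -> exists z, b i = Some z /\ Fd z) /\
     (forall i, n < i -> b i = None)).

Definition starts_in (F : Type) (b : fseq F) (x : F) : Prop := b 0 = Some x.

Definition is_J_branch (F : Type) (J : labeled_graph F) (r : node J) (b : fseq F) : Prop :=
  (exists p : nat -> node J, p 0 = r /\
     (forall i, edge J (p i) (p (S i))) /\
     (forall i, b i = Some (lab J (p i)))) \/
  (exists (p : nat -> node J) (n : nat), p 0 = r /\
     (forall i, i < n -> edge J (p i) (p (S i))) /\
     is_leaf J (p n) /\
     (forall i, i <= n -> b i = Some (lab J (p i))) /\
     (forall i, n < i -> b i = None)).

Definition branch_selection (F : Type) (Fd : F -> Prop) (R : F -> (F -> Prop) -> Prop)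
    (x : F) (B : fseq F -> Prop) : Prop :=
  (forall b, B b -> is_branch Fd b /\ starts_in b x) /\
  (forall (J : labeled_graph F) (r : node J), in_frakJ Fd R x J r ->
     exists b, is_J_branch J r b /\ B b).

Definition fcons (F : Type) (x : F) (b : fseq F) : fseq F :=
  fun n => match n with 0 => Some x | S k => b k end.

(* Main.v *)
Require Import Defs.
From Stdlib Require Import Relations Classical ClassicalEpsilon FunctionalExtensionality PropExtensionality Eqdep Arith Lia.
Set Implicit Arguments.

Inductive cedge (F I : Type) (G : I -> labeled_graph F) (rt : forall i, node (G i))
  : option {i : I & node (G i)} -> option {i : I & node (G i)} -> Prop :=
| ce_root : forall i, cedge G rt None (Some (existT _ i (rt i)))
| ce_in : forall i n m, edge (G i) n m ->
    cedge G rt (Some (existT _ i n)) (Some (existT _ i m)).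

Definition clab (F I : Type) (G : I -> labeled_graph F) (x : F)
  (o : option {i : I & node (G i)}) : F :=
  match o with None => x | Some (existT _ i n) => lab (G i) n end.

Definition cgraph (F I : Type) (G : I -> labeled_graph F) (rt : forall i, node (G i)) (x : F)
  : labeled_graph F := @LabeledGraph F (option {i : I & node (G i)}) (cedge G rt) (clab G x).

Ltac injp := repeat match goal with H : existT _ _ _ = existT _ _ _ |- _ => apply inj_pair2 in H end; subst.

Lemma cedge_in_inv F I (G : I -> labeled_graph F) rt i n m :
  cedge G rt (Some (existT _ i n)) (Some (existT _ i m)) -> edge (G i) n m.
Proof.
  intro H; inversion H; subst.
  injp; assumption.
Qed.

Lemma cedge_from_some F I (G : I -> labeled_graph F) rt i n o :
  cedge G rt (Some (existT _ i n)) o -> exists m, o = Some (existT _ i m) /\ edge (G i) n m.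
Proof.
  intro H; inversion H; subst.
  injp. eauto.
Qed.

Lemma cedge_into_some F I (G : I -> labeled_graph F) rt i n o :
  cedge G rt o (Some (existT _ i n)) ->
  (o = None /\ n = rt i) \/ (exists m, o = Some (existT _ i m) /\ edge (G i) m n).
Proof.
  intro H; inversion H; subst.
  - injp. left; auto.
  - injp. right; eauto.
Qed.

Lemma no_into_none F I (G : I -> labeled_graph F) rt a :
  ~ clos_trans _ (cedge G rt) a None.
Proof.
  intro H. apply clos_trans_tn1 in H. inversion H; subst; inversion H0.
Qed.

Lemma ct_into_some F I (G : I -> labeled_graph F) rt a b :
  clos_trans _ (cedge G rt) a b -> forall i n, b = Some (existT _ i n) ->
  a = None \/ exists m, a = Some (existT _ i m) /\ clos_trans _ (edge (G i)) m n.
Proof.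
  intro H. apply clos_trans_tn1 in H. induction H; intros i n Hb; subst.
  - apply cedge_into_some in H. destruct H as [[-> _]|[m [-> He]]]; auto.
    right; exists m; split; auto. constructor; auto.
  - destruct y as [[j k]|].
    + apply cedge_into_some in H. destruct H as [[H _]|[m [Hm He]]]; [discriminate|].
      inversion Hm; subst; injp.
      destruct (IHclos_trans_n1 i m eq_refl) as [?|[m' [? ?]]]; auto.
      right; exists m'; split; auto. eapply t_trans; eauto. constructor; auto.
    + exfalso. apply clos_tn1_trans in H0. eapply no_into_none; exact H0.
Qed.

Lemma crt_lift F I (G : I -> labeled_graph F) rt i m n :
  clos_refl_trans _ (edge (G i)) m n ->
  clos_refl_trans _ (cedge G rt) (Some (existT _ i m)) (Some (existT _ i n)).
Proof.
  induction 1.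
  - constructor. constructor; auto.
  - apply rt_refl.
  - eapply rt_trans; eauto.
Qed.

Lemma cgraph_frakJ (F : Type) (Fd : F -> Prop) (R : F -> (F -> Prop) -> Prop)
  (x : F) (A : F -> Prop) (Hx : Fd x) (HA : R x A) (y0 : F) (Hy0 : A y0)
  (G : {y | A y} -> labeled_graph F) (rt : forall i, node (G i))
  (HG : forall i, in_frakJ Fd R (proj1_sig i) (G i) (rt i)) :
  in_frakJ Fd R x (cgraph G rt x) None.
Proof.
  split; [split; [split|]|split].
  - intros n1 n2 m H1 H2. destruct m as [[i m]|]; [|inversion H1].
    apply cedge_into_some in H1; apply cedge_into_some in H2.
    destruct H1 as [[-> ->]|[k1 [-> E1]]]; destruct H2 as [[-> E2]|[k2 [-> E2]]]; auto.
    + exfalso. destruct (HG i) as [[[_ Hac] _] [_ [_ Hr]]].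
      apply (Hac (rt i)). apply clos_rt_t with k2; [apply Hr|]. constructor; auto.
    + exfalso. destruct (HG i) as [[[_ Hac] _] [_ [_ Hr]]].
      apply (Hac (rt i)). apply clos_rt_t with k1; [apply Hr|]. constructor; subst; auto.
    + destruct (HG i) as [[[Hu _] _] _]. rewrite (Hu k1 k2 m E1 E2). reflexivity.
  - intros [[i n]|] Hc.
    + pose proof (ct_into_some Hc eq_refl) as [H|[m [Hm Hc']]]; [discriminate|].
      inversion Hm; subst; injp. destruct (HG i) as [[[_ Hac] _] _]. exact (Hac _ Hc').
    + exact (no_into_none Hc).
  - intros [[i n]|] Hnl; simpl.
    + destruct (HG i) as [[_ Hj] _].
      assert (Hnl' : ~ is_leaf (G i) n).
      { intros Hl. apply Hnl. intros o Ho. apply cedge_from_some in Ho.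
        destruct Ho as [m [_ Hm]]. exact (Hl m Hm). }
      destruct (Hj n Hnl') as [Hfd HR]. split; auto.
      replace (fun y => exists m, cedge G rt (Some (existT _ i n)) m /\ clab G x m = y)
        with (fun y => exists m, edge (G i) n m /\ lab (G i) m = y); auto.
      apply functional_extensionality; intro z; apply propositional_extensionality; split.
      * intros [m [Hm Hl]]. exists (Some (existT _ i m)). split; auto. constructor; auto.
      * intros [o [Ho Hl]]. apply cedge_from_some in Ho. destruct Ho as [m [-> Hm]].
        exists m; auto.
    + split; auto.
      replace (fun y => exists m, cedge G rt None m /\ clab G x m = y) with A; auto.
      apply functional_extensionality; intro z; apply propositional_extensionality; split.
      * intros Hz. exists (Some (existT _ (exist _ z Hz) (rt (exist _ z Hz)))). split.
        -- constructor.
        -- simpl. destruct (HG (exist _ z Hz)) as [_ [_ [Hl _]]]. exact Hl.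
      * intros [o [Ho Hl]]. inversion Ho; subst. simpl.
        destruct (HG i) as [_ [_ [Hl _]]]. rewrite Hl. exact (proj2_sig i).
  - intros [[i n]|] Hl; simpl.
    + destruct (HG i) as [_ [Hlc _]]. apply Hlc. intros m Hm. apply (Hl (Some (existT _ i m))).
      constructor; auto.
    + exfalso. apply (Hl (Some (existT _ (exist _ y0 Hy0) (rt _)))). constructor.
  - split; auto. intros [[i n]|].
    + apply rt_trans with (Some (existT _ i (rt i))).
      * constructor. constructor.
      * apply crt_lift. destruct (HG i) as [_ [_ [_ Hr]]]. apply Hr.
    + apply rt_refl.
Qed.

Lemma path_in_one F I (G : I -> labeled_graph F) rt x (p : nat -> node (cgraph G rt x)) N :
  p 0 = None -> (forall i, i < S N -> cedge G rt (p i) (p (S i))) ->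
  exists j, forall i, i <= N -> exists m, p (S i) = Some (existT _ j m).
Proof.
  intros H0 He. pose proof (He 0 ltac:(lia)) as E. rewrite H0 in E.
  inversion E as [j Hj|]. exists j. induction i as [|i IH]; intros Hi.
  - eexists; eauto.
  - destruct (IH ltac:(lia)) as [m Hm]. pose proof (He (S i) ltac:(lia)) as E2.
    rewrite Hm in E2. apply cedge_from_some in E2. destruct E2 as [m' [Hm' _]]; eauto.
Qed.

Lemma branch_decomp F I (G : I -> labeled_graph F) rt x (i0 : I) b :
  is_J_branch (cgraph G rt x) None b ->
  exists j b', is_J_branch (G j) (rt j) b' /\ b = fcons x b'.
Proof.
  intros [[p [H0 [He Hb]]]|[p [N [H0 [He [Hl [Hb Hb2]]]]]]].
  - assert (Hj : exists j, forall i, exists m, p (S i) = Some (existT _ j m)).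
    { pose proof (He 0) as E. rewrite H0 in E.
      inversion E as [j Hj|]. exists j. induction i as [|i IH].
      - eexists; eauto.
      - destruct IH as [m Hm]. pose proof (He (S i)) as E2.
        rewrite Hm in E2. apply cedge_from_some in E2. destruct E2 as [m' [Hm' _]]; eauto. }
    destruct Hj as [j Hj].
    pose (q := fun i => proj1_sig (constructive_indefinite_description _ (Hj i))).
    assert (Hq : forall i, p (S i) = Some (existT _ j (q i))).
    { intro i. unfold q. destruct (constructive_indefinite_description _ (Hj i)); auto. }
    exists j, (fun k => b (S k)). split.
    + left. exists q. split; [|split].
      * pose proof (He 0) as E. rewrite H0, Hq in E. inversion E; injp; auto.
      * intro i. pose proof (He (S i)) as E. rewrite !Hq in E. apply cedge_in_inv in E; auto.
      * intro i. rewrite Hb, Hq. reflexivity.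
    + apply functional_extensionality. intros [|k]; simpl; auto. rewrite Hb, H0. reflexivity.
  - destruct N as [|N].
    + exfalso. rewrite H0 in Hl. apply (Hl (Some (existT _ i0 (rt i0)))). constructor.
    + destruct (path_in_one p H0 He) as [j Hj].
      assert (Hj' : forall i, exists m, i <= N -> p (S i) = Some (existT _ j m)).
      { intro i. destruct (le_lt_dec i N) as [h|h].
        - destruct (Hj i h) as [m Hm]; exists m; auto.
        - exists (rt j). intro; lia. }
      pose (q := fun i => proj1_sig (constructive_indefinite_description _ (Hj' i))).
      assert (Hq : forall i, i <= N -> p (S i) = Some (existT _ j (q i))).
      { intro i. unfold q. destruct (constructive_indefinite_description _ (Hj' i)); auto. }
      exists j, (fun k => b (S k)). split.
      * right. exists q, N. split; [|split; [|split; [|split]]].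
        -- pose proof (He 0 ltac:(lia)) as E. rewrite H0, (Hq 0 ltac:(lia)) in E.
           inversion E; injp; auto.
        -- intros i Hi. pose proof (He (S i) ltac:(lia)) as E.
           rewrite (Hq i ltac:(lia)), (Hq (S i) ltac:(lia)) in E. apply cedge_in_inv in E; auto.
        -- intros m Hm. rewrite (Hq N ltac:(lia)) in Hl. apply (Hl (Some (existT _ j m))).
           constructor; auto.
        -- intros i Hi. rewrite (Hb (S i) ltac:(lia)), (Hq i Hi). reflexivity.
        -- intros i Hi. apply Hb2. lia.
      * apply functional_extensionality. intros [|k]; simpl; auto.
        rewrite (Hb 0 ltac:(lia)), H0. reflexivity.
Qed.

Theorem mainTheorem2 (F : Type) (neg : F -> F) (t f u : F)
    (Fd : F -> Prop) (R : F -> (F -> Prop) -> Prop)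
    (Hframe : is_justification_frame neg t f u Fd R)
    (x : F) (Hx : Fd x) (B : fseq F -> Prop) (HB : branch_selection Fd R x B)
    (A : F -> Prop) (HA : R x A) :
  exists ystar, A ystar /\
    forall (J : labeled_graph F) (r : node J), in_frakJ Fd R ystar J r ->
      exists b, is_J_branch J r b /\ B (fcons x b).
Proof.
  destruct Hframe as [_ [_ [_ [_ [_ [_ [_ Hne]]]]]]].
  destruct (Hne x A HA) as [y0 Hy0].
  apply NNPP. intro Hn.
  assert (Hall : forall i : {y | A y}, exists J : labeled_graph F, exists r : node J,
             in_frakJ Fd R (proj1_sig i) J r /\
             forall b, is_J_branch J r b -> ~ B (fcons x b)).
  { intros [y Hy]. simpl. apply NNPP. intro H. apply Hn. exists y. split; auto.
    intros J r HJ. apply NNPP. intro H2. apply H. exists J, r. split; auto.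
    intros b Hb HBb. apply H2. eauto. }
  pose (G := fun i => proj1_sig (constructive_indefinite_description _ (Hall i))).
  assert (HG : forall i, exists r : node (G i), in_frakJ Fd R (proj1_sig i) (G i) r /\
             forall b, is_J_branch (G i) r b -> ~ B (fcons x b)).
  { intro i. unfold G. destruct (constructive_indefinite_description _ (Hall i)); auto. }
  pose (rt := fun i => proj1_sig (constructive_indefinite_description _ (HG i))).
  assert (Hrt : forall i, in_frakJ Fd R (proj1_sig i) (G i) (rt i) /\
             forall b, is_J_branch (G i) (rt i) b -> ~ B (fcons x b)).
  { intro i. unfold rt. destruct (constructive_indefinite_description _ (HG i)); auto. }
  assert (Hfr := @cgraph_frakJ F Fd R x A Hx HA y0 Hy0 G rt (fun i => proj1 (Hrt i))).
  destruct HB as [_ HB]. destruct (HB _ _ Hfr) as [b [Hb HBb]].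
  destruct (branch_decomp (exist _ y0 Hy0) Hb) as [j [b' [Hb' ->]]].
  exact (proj2 (Hrt j) b' Hb' HBb).
Qed.
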